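(* Consider $$u_i'=\mu\sum_{j=1}^nL_{ij}u_j+u_i(p_i-u_i-v_i),\qquad v_i'=\mu\sum_{j=1}^nL_{ij}v_j+v_i(q_i-u_i-v_i),\qquad i=1,\dots,n,$$ with $\mu>0$, $p,q\gg0$, and assume (A2)–(A3). Let $\Omega_u=\{i:p_i>q_i\}$ and $\Omega_v=\{i:p_i<q_i\}$, and suppose both are nonempty and $\Omega_u\cup\Omega_v=\{1,\dots,n\}$. Define $u_0,v_0\in\mathbb R^n$ by $u_{0i}=p_i$, $v_{0i}=0$ for $i\in\Omega_u$ and $u_{0i}=0$, $v_{0i}=q_i$ for $i\in\Omega_v$. For $\mu>0$ small, let $(u,v)=(u(\mu),v(\mu))$ be the unique positive equilibrium of the system. Then $\lim_{\mu\to0^+}(u(\mu),v(\mu))=(u_0,v_0)$.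
   Context: Let $n\ge2$ and $A=(a_{ij})_{n\times n}$ with $a_{ij}\ge0$ for $i\ne j$. The connection matrix $L$ has $L_{ij}=a_{ij}$ for $i\ne j$, $L_{ii}=-\sum_{k\ne i}a_{ki}$. The weighted digraph $\mathcal G$ associated with $A$ has vertices $\{1,\dots,n\}$ and, for $i\ne j$, an arc $(i,j)$ iff $a_{ji}>0$, with weight $a_{ji}$. A cycle is a list of distinct vertices $i_1,\dots,i_k$, $k\ge2$, with arcs $(i_m,i_{m+1})$, $m<k$, and $(i_k,i_1)$; its weight is the product of its arc weights; its reverse has all arcs reversed. $\mathcal G$ is cycle-balanced if for every cycle its reverse is also a cycle of $\mathcal G$ with the same weight. (A2): $L$ is irreducible. (A3): $\mathcal G$ is cycle-balanced. Under these hypotheses (since $p\not\ge q$ and $q\not\ge p$) the system has, for all sufficiently small $\mu>0$, a unique positive equilibrium. *)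

(* Defs.v *)
From HB Require Import structures.
From mathcomp Require Import all_boot all_order all_algebra.
From mathcomp Require Import reals.
Set Implicit Arguments. Unset Strict Implicit. Unset Printing Implicit Defensive.
Import Order.TTheory GRing.Theory Num.Theory.
Local Open Scope ring_scope.

Section Defs.
Variables (R : realType) (n : nat).
Implicit Types (a : 'I_n -> 'I_n -> R) (s : seq 'I_n).

Definition conn_matrix a : 'M[R]_n :=
  \matrix_(i, j) (if i == j then - \sum_(k | k != i) a k i else a i j).

Definition irreducible_mx (M : 'M[R]_n) : Prop :=
  forall S : {set 'I_n}, S != set0 -> S != [set: 'I_n] ->
    exists i j, [/\ i \in S, j \notin S & M i j != 0].

(* digraph G: arc (i,j) iff i <> j and a_ji > 0, with weight a_ji *)
Definition arc a (i j : 'I_n) : bool := (i != j) && (0 < a j i).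

Definition is_cycle a s : bool := [&& uniq s, (2 <= size s)%N & cycle (arc a) s].

Definition cycle_weight a s : R := \prod_(x <- s) a (next s x) x.

Definition cycle_balanced a : Prop :=
  forall s, is_cycle a s -> is_cycle a (rev s) /\ cycle_weight a (rev s) = cycle_weight a s.

Definition is_equilibrium a (p q : 'I_n -> R) (mu : R) (u v : 'I_n -> R) : Prop :=
  forall i,
    mu * (\sum_j conn_matrix a i j * u j) + u i * (p i - u i - v i) = 0 /\
    mu * (\sum_j conn_matrix a i j * v j) + v i * (q i - u i - v i) = 0.

Definition positive_vec (w : 'I_n -> R) : Prop := forall i, 0 < w i.

Definition is_pos_equilibrium a p q mu u v : Prop :=
  is_equilibrium a p q mu u v /\ positive_vec u /\ positive_vec v.

Definition u0 (p q : 'I_n -> R) : 'I_n -> R := fun i => if q i < p i then p i else 0.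
Definition v0 (p q : 'I_n -> R) : 'I_n -> R := fun i => if p i < q i then q i else 0.

End Defs.

(* Main.v *)
Require Import Defs.
From HB Require Import structures.
From mathcomp Require Import all_boot all_order all_algebra.
From mathcomp Require Import reals ring lra.
From Stdlib Require Import FunctionalExtensionality.
Import Order.TTheory GRing.Theory Num.Theory.
Local Open Scope ring_scope.
Set Implicit Arguments. Unset Strict Implicit. Unset Printing Implicit Defensive.

Lemma site_apriori (R : realType) (ui vi pi qi mu sU sV Ai al Ub rho m : R) :
  0 < mu -> mu <= 1 -> 0 < ui -> 0 < vi -> ui <= Ub ->
  0 <= sU -> sU <= al * Ub -> 0 <= sV -> sV <= al * Ub ->
  0 <= Ai -> Ai <= al -> 0 <= al -> 0 <= Ub ->
  ui * (ui + vi - pi) = mu * (sU - Ai * ui) ->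
  vi * (ui + vi - qi) = mu * (sV - Ai * vi) ->
  0 < m -> m <= pi - qi -> m <= pi -> m <= rho -> m <= 1 ->
  mu * ((al + 1) * (1 + Ub)) <= m ^+ 2 / 8 ->
  (- rho <= ui - pi <= rho) /\ vi <= rho.
Proof.
move=> mu0 mu1 ui0 vi0 uiU sU0 sU1 sV0 sV1 A0 A1 al0 Ub0 Eu Ev m0 mpq mp mr m1 hmu.
have hc : al * Ub <= (al + 1) * (1 + Ub) by nra.
have hc2 : al <= (al + 1) * (1 + Ub) by nra.
have m2 : m ^+ 2 / 8 <= m / 8 by rewrite expr2; nra.
have h1 : mu * al <= m / 8 by nra.
have h2 : mu * (al * Ub) <= m / 8 * m by rewrite expr2 in hmu; nra.
have hA : mu * Ai <= m / 8.
  have : mu * Ai <= mu * al by apply: ler_wpM2l; lra.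
  lra.
have X : 0 <= ui + vi - pi + mu * Ai.
  have : ui * (ui + vi - pi + mu * Ai) = mu * sU by rewrite mulrDr Eu; ring.
  move=> E; have : 0 <= mu * sU by nra.
  rewrite -E => H; nra.
have Y : vi * (ui + vi - qi) <= m / 8 * m.
  have : mu * (Ai * vi) >= 0 by rewrite !mulr_ge0 //; lra.
  have : mu * sV <= mu * (al * Ub) by apply: ler_wpM2l; lra.
  rewrite Ev; lra.
have Z : vi <= m / 7 by nra.
have W : ui >= m / 2 by nra.
have P1 : mu * (Ai * ui) >= 0 by rewrite !mulr_ge0 //; lra.
have P2 : mu * sU <= mu * (al * Ub) by apply: ler_wpM2l; lra.
have P3 : Ai * ui <= al * Ub by apply: ler_pM; lra.
have P4 : mu * (Ai * ui) <= mu * (al * Ub) by apply: ler_wpM2l; lra.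
have P5 : 0 <= mu * sU by rewrite mulr_ge0 //; lra.
have T1 : ui * (ui + vi - pi) <= m / 4 * m.
  rewrite Eu; nra.
have T2 : ui * (ui + vi - pi) >= - (m / 4 * m).
  rewrite Eu; nra.
have T3 : ui + vi - pi <= m / 2 by nra.
have T4 : ui + vi - pi >= - (m / 2) by nra.
split; [apply/andP; split|]; lra.
Qed.

Unset Implicit Arguments.


Lemma ratio_diff (R : realType) (s s' d d' S E Dd e m2 : R) :
  0 < d -> 0 < d' -> 0 < m2 -> m2 <= d * d' ->
  `|s - s'| <= E -> 0 <= s' -> s' <= S -> `|d - d'| <= Dd -> 0 <= d' -> d' <= e ->
  `|s / d - s' / d'| * m2 <= E * e + S * Dd.
Proof.
move=> d0 d'0 m0 md hs s'0 s'S hd _ d'e.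
have E1 : s / d - s' / d' = ((s - s') * d' + s' * (d' - d)) / (d * d').
  by field; apply/andP; split; rewrite gt_eqF.
have dd0 : 0 < d * d' by rewrite mulr_gt0.
rewrite E1 normrM [`|(d * d')^-1|]ger0_norm; last by rewrite invr_ge0 ltW.
apply: (le_trans (y := `|(s - s') * d' + s' * (d' - d)| / (d * d') * (d * d'))).
  apply: ler_wpM2l => //; rewrite divr_ge0 //; exact: ltW.
rewrite divfK ?gt_eqF //.
apply: (le_trans (ler_normD _ _)).
apply: lerD.
  rewrite normrM (ger0_norm (ltW d'0)); apply: ler_pM => //; exact: ltW.
rewrite normrM (ger0_norm s'0) distrC; apply: ler_pM => //.
Qed.

Definition bigF {R : realType} (r x y s A mu : R) := r - y + mu * (s / x - A).
Definition smallF {R : realType} (r x y s A mu : R) := mu * s / (x + y - r + mu * A).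

Section Pure.
Variables (R : realType) (al B m rho mu : R).
Hypotheses (al0 : 0 <= al) (m0 : 0 < m) (m1 : m <= 1) (rho0 : 0 < rho)
  (rhom : 4 * rho <= m) (rhoB : rho <= B) (mu0 : 0 < mu) (mu1 : mu <= 1)
  (Cc : mu * (32 * ((al + 1) * (4 * B + al + 1))) <= m ^+ 2)
  (Ci : mu * ((al + 1) * (2 * B + 1)) * 4 <= m * rho).

Ltac pull := move: (al0) (m0) (m1) (rho0) (rhom) (rhoB) (mu0) (mu1) (Cc) (Ci) => ? ? ? ? ? ? ? ? ? ?.

Lemma big_in (r x y s A : R) :
  m <= r -> r + 2 * rho <= B -> `|x - r| <= 2 * rho -> 0 <= y -> y <= rho ->
  0 <= s -> s <= al * B -> 0 <= A -> A <= al ->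
  `|bigF r x y s A mu - r| <= 2 * rho.
Proof.
move=> mr rB /ler_normlP [hx1 hx2] y0 yr s0 sB A0 Aal; pull.
have x0 : m / 2 <= x by lra.
have xpos : 0 < x by lra.
set t := s / x.
have t0 : 0 <= t by rewrite divr_ge0 //; lra.
have tx : t * x = s by rewrite /t divfK // gt_eqF.
have tm : t * m <= 2 * (al * B) by nra.
have h1 : mu * (al * B) * 4 <= m * rho.
  have : al * B <= (al + 1) * (2 * B + 1) by nra.
  nra.
have h2 : mu * t <= rho / 2.
  have : mu * t * m <= 2 * (mu * (al * B)) by nra.
  nra.
have h3 : mu * A <= rho / 2.
  have : al <= (al + 1) * (2 * B + 1) by nra.
  have : mu * A <= mu * al by apply: ler_wpM2l; lra.
  nra.
have h4 : 0 <= mu * A by rewrite mulr_ge0 //; lra.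
have h5 : 0 <= mu * t by rewrite mulr_ge0 //; lra.
rewrite /bigF -/t; apply/ler_normlP; split; lra.
Qed.

Lemma small_in (r x y py s A : R) :
  0 <= x -> x <= rho -> `|y - py| <= 2 * rho -> m <= py - r ->
  0 <= s -> s <= al * B -> 0 <= A -> A <= al ->
  0 <= smallF r x y s A mu /\ smallF r x y s A mu <= rho.
Proof.
move=> x0 xr /ler_normlP [hy1 hy2] mpr s0 sB A0 Aal; pull.
have h0 : 0 <= mu * A by rewrite mulr_ge0 //; lra.
set d := x + y - r + mu * A.
have d0 : m / 2 <= d by rewrite /d; lra.
have dpos : 0 < d by lra.
rewrite /smallF -/d.
set t := mu * s / d.
have t0 : 0 <= t by rewrite divr_ge0 //; [rewrite mulr_ge0 //; lra | lra].
have td : t * d = mu * s by rewrite /t divfK // gt_eqF.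
have h1 : mu * (al * B) * 4 <= m * rho.
  have : al * B <= (al + 1) * (2 * B + 1) by nra.
  nra.
have h2 : mu * s <= mu * (al * B) by apply: ler_wpM2l; lra.
split => //; nra.
Qed.

Lemma big_contr (r x x' y y' s s' A D : R) :
  `|x - r| <= 2 * rho -> `|x' - r| <= 2 * rho -> m <= r -> r + 2 * rho <= B ->
  `|y - y'| <= D / 4 -> 0 <= s -> s <= al * B -> 0 <= s' -> s' <= al * B ->
  `|s - s'| <= al * D -> `|x - x'| <= D -> 0 <= D ->
  `|bigF r x y s A mu - bigF r x' y' s' A mu| <= D / 2.
Proof.
move=> hx hx' mr rB hy s0 sB s'0 s'B hs hxx D0; pull.
move/ler_normlP: (hx) => [hx1 hx2]; move/ler_normlP: (hx') => [hx1' hx2'].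
have x0 : m / 2 <= x by lra.
have x'0 : m / 2 <= x' by lra.
have m2 : m ^+ 2 / 4 <= x * x'.
  have -> : m ^+ 2 / 4 = (m / 2) * (m / 2) by rewrite expr2; field.
  apply: ler_pM => //; lra.
have := @ratio_diff R s s' x x' (al * B) (al * D) D B (m ^+ 2 / 4).
move=> /(_ ltac:(lra) ltac:(lra) ltac:(rewrite divr_gt0 // exprn_gt0 //) m2 hs s'0 s'B hxx ltac:(lra) ltac:(lra)).
set T := `|s / x - s' / x'|.
move=> HT.
have T0 : 0 <= T by apply: normr_ge0.
have H1 : 8 * (mu * (al * B)) <= m ^+ 2 / 4.
  have : al * B <= (al + 1) * (4 * B + al + 1) by nra.
  nra.
have H2 : mu * T * m ^+ 2 <= 8 * (mu * (al * B)) * D.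
  have : mu * (T * (m ^+ 2 / 4)) <= mu * (al * D * B + al * B * D) by apply: ler_wpM2l; lra.
  move=> H; have -> : mu * T * m ^+ 2 = 4 * (mu * (T * (m ^+ 2 / 4))) by field.
  lra.
have H3 : mu * T * m ^+ 2 <= D / 4 * m ^+ 2.
  have : 8 * (mu * (al * B)) * D <= m ^+ 2 / 4 * D by apply: ler_wpM2r.
  lra.
have H4 : mu * T <= D / 4.
  by rewrite -(ler_pM2r (exprn_gt0 2 m0)).
have -> : bigF r x y s A mu - bigF r x' y' s' A mu = - (y - y') + mu * (s / x - s' / x').
  by rewrite /bigF; ring.
apply: (le_trans (ler_normD _ _)).
rewrite normrN normrM (ger0_norm (ltW mu0)) -/T; lra.
Qed.

Lemma small_contr (r x x' y y' py s s' A D : R) :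
  0 <= x -> x <= rho -> 0 <= x' -> x' <= rho ->
  `|y - py| <= 2 * rho -> `|y' - py| <= 2 * rho -> m <= py - r -> py + 2 * rho <= B ->
  0 <= r -> `|x - x'| <= D / 4 -> `|y - y'| <= D ->
  0 <= s -> s <= al * B -> 0 <= s' -> s' <= al * B ->
  `|s - s'| <= al * D -> 0 <= A -> A <= al -> 0 <= D ->
  `|smallF r x y s A mu - smallF r x' y' s' A mu| <= D / 8.
Proof.
move=> x0 xr x'0 x'r hy hy' mpr pB r0 hxx hyy s0 sB s'0 s'B hs A0 Aal D0; pull.
move/ler_normlP: (hy) => [hy1 hy2]; move/ler_normlP: (hy') => [hy1' hy2'].
have h0 : 0 <= mu * A by rewrite mulr_ge0 //; lra.
have h0' : mu * A <= al.
  have : mu * A <= 1 * A by apply: ler_wpM2r.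
  lra.
set d := x + y - r + mu * A.
set d' := x' + y' - r + mu * A.
have d0 : m / 2 <= d by rewrite /d; lra.
have d'0 : m / 2 <= d' by rewrite /d'; lra.
have m2 : m ^+ 2 / 4 <= d * d'.
  have -> : m ^+ 2 / 4 = (m / 2) * (m / 2) by rewrite expr2; field.
  apply: ler_pM => //; lra.
have hdd : `|d - d'| <= 2 * D.
  have -> : d - d' = (x - x') + (y - y') by rewrite /d /d'; ring.
  apply: (le_trans (ler_normD _ _)); lra.
have := @ratio_diff R s s' d d' (al * B) (al * D) (2 * D) (2 * B + al) (m ^+ 2 / 4).
move=> /(_ ltac:(lra) ltac:(lra) ltac:(rewrite divr_gt0 // exprn_gt0 //) m2 hs s'0 s'B hdd ltac:(lra) ltac:(rewrite /d'; lra)).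
set T := `|s / d - s' / d'|.
move=> HT.
have T0 : 0 <= T by apply: normr_ge0.
have H1 : 4 * (mu * (al * (4 * B + al))) <= m ^+ 2 / 8.
  have : al * (4 * B + al) <= (al + 1) * (4 * B + al + 1) by nra.
  nra.
have H2 : mu * T * m ^+ 2 <= 4 * (mu * (al * (4 * B + al))) * D.
  have : mu * (T * (m ^+ 2 / 4)) <= mu * (al * D * (2 * B + al) + al * B * (2 * D)).
    by apply: ler_wpM2l; lra.
  move=> H; have -> : mu * T * m ^+ 2 = 4 * (mu * (T * (m ^+ 2 / 4))) by field.
  have -> : 4 * (mu * (al * (4 * B + al))) * D = 4 * (mu * (al * D * (2 * B + al) + al * B * (2 * D))) by ring.
  lra.
have H3 : mu * T * m ^+ 2 <= D / 8 * m ^+ 2.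
  have : 4 * (mu * (al * (4 * B + al))) * D <= m ^+ 2 / 8 * D by apply: ler_wpM2r.
  lra.
have H4 : mu * T <= D / 8.
  by rewrite -(ler_pM2r (exprn_gt0 2 m0)).
have -> : smallF r x y s A mu - smallF r x' y' s' A mu = mu * (s / d - s' / d').
  by rewrite /smallF -/d -/d'; ring.
rewrite normrM (ger0_norm (ltW mu0)) -/T; lra.
Qed.

End Pure.

Set Implicit Arguments.

Section Basic.
Variables (R : realType) (n : nat) (a : 'I_n -> 'I_n -> R).

Definition sF (w : 'I_n -> R) i := \sum_(j | j != i) a i j * w j.
Definition AF i := \sum_(k | k != i) a k i.
Definition alpha := \sum_i \sum_j `|a i j|.

Lemma Lexp w i : \sum_j conn_matrix a i j * w j = sF w i - AF i * w i.
Proof.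
rewrite (bigD1 i) //= mxE eqxx /sF /AF addrC mulNr; congr (_ - _).
by apply: eq_bigr => j ji; rewrite mxE eq_sym (negbTE ji).
Qed.

Lemma sum_sub_le (F : 'I_n -> R) (P : pred 'I_n) :
  (forall j, 0 <= F j) -> \sum_(j | P j) F j <= \sum_j F j.
Proof.
move=> F0; rewrite [X in _ <= X](bigID P) /= lerDl; exact: sumr_ge0.
Qed.

Lemma row_le i : \sum_j `|a i j| <= alpha.
Proof.
rewrite /alpha [X in _ <= X](bigD1 i) //= lerDl; apply: sumr_ge0 => k _; apply: sumr_ge0 => *; exact: normr_ge0.
Qed.

Lemma alpha_ge0 : 0 <= alpha.
Proof. apply: sumr_ge0 => k _; apply: sumr_ge0 => *; exact: normr_ge0. Qed.

Hypothesis a0 : forall i j, i != j -> 0 <= a i j.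

Lemma AF_ge0 i : 0 <= AF i.
Proof. apply: sumr_ge0 => k ki; exact: a0. Qed.

Lemma AF_le i : AF i <= alpha.
Proof.
apply: (le_trans (y := \sum_(k | k != i) `|a k i|)).
  apply: ler_sum => k _; exact: ler_norm.
apply: le_trans (@sum_sub_le (fun k => `|a k i|) (fun k => k != i) (fun k => normr_ge0 _)) _.
rewrite /alpha; apply: ler_sum => k _.
rewrite (bigD1 i) //= lerDl; apply: sumr_ge0 => *; exact: normr_ge0.
Qed.

Lemma sF_bound w W i : 0 <= W -> (forall j, `|w j| <= W) -> `|sF w i| <= alpha * W.
Proof.
move=> W0 hw; rewrite /sF.
apply: (le_trans (ler_norm_sum _ _ _)).
apply: (le_trans (y := \sum_(j | j != i) `|a i j| * W)).
  apply: ler_sum => j _; rewrite normrM; apply: ler_wpM2l => //; exact: normr_ge0.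
rewrite -mulr_suml; apply: ler_wpM2r => //.
apply: le_trans (@sum_sub_le (fun j => `|a i j|) (fun j => j != i) (fun j => normr_ge0 _)) _.
exact: row_le.
Qed.

Lemma sF_ge0 w i : (forall j, 0 <= w j) -> 0 <= sF w i.
Proof. move=> w0; apply: sumr_ge0 => j ji; apply: mulr_ge0 => //; by apply: a0; rewrite eq_sym. Qed.

Lemma sF_le w W i : 0 <= W -> (forall j, 0 <= w j <= W) -> sF w i <= alpha * W.
Proof.
move=> W0 hw; have := @sF_bound w W i W0.
rewrite ger0_norm; last by apply: sF_ge0 => j; case/andP: (hw j).
apply => j; case/andP: (hw j) => h1 h2; by rewrite ger0_norm.
Qed.

Lemma sF_sub w w' i : sF w i - sF w' i = sF (fun j => w j - w' j) i.
Proof. rewrite /sF -sumrB; apply: eq_bigr => j _; ring. Qed.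

End Basic.

Section Eqn.
Variables (R : realType) (n : nat) (a : 'I_n -> 'I_n -> R).
Hypothesis a0 : forall i j, i != j -> 0 <= a i j.

Definition eqnL (pp u v : 'I_n -> R) (mu : R) :=
  forall i, mu * (sF a u i - AF a i * u i) + u i * (pp i - u i - v i) = 0.

Lemma eq_split p q mu u v :
  is_equilibrium a p q mu u v <-> eqnL p u v mu /\ eqnL q v u mu.
Proof.
split.
  move=> H; split => i; have [H1 H2] := H i; rewrite -Lexp; first exact: H1.
  have -> : q i - v i - u i = q i - u i - v i by ring.
  exact: H2.
move=> [H1 H2] i; rewrite !Lexp; split; first exact: H1.
have -> : q i - u i - v i = q i - v i - u i by ring.
exact: H2.
Qed.

Lemma sum_ge_term (f : 'I_n -> R) i : (forall j, 0 <= f j) -> f i <= \sum_j f j.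
Proof. move=> f0; rewrite (bigD1 i) //= lerDl; exact: sumr_ge0. Qed.

Lemma ub_one (pp u v : 'I_n -> R) mu :
  0 < mu -> mu <= 1 -> positive_vec pp -> positive_vec u -> positive_vec v ->
  eqnL pp u v mu -> forall j, u j <= \sum_i pp i + alpha a.
Proof.
move=> mu0 mu1 pp0 u0 v0 E j.
have [k _ hk] := @arg_maxP _ _ _ j xpredT u isT.
set uk := u [arg max_(i > j) u i]%O in hk *.
move: k hk uk => k hk _.
have hk' : forall i, u i <= u k by move=> i; exact: hk.
have Ek := E k.
have s1 : sF a u k <= alpha a * u k.
  apply: sF_le => //; first exact: ltW.
  by move=> i; rewrite hk' andbT ltW.
have A0 := AF_ge0 a0 k.
have al0 := alpha_ge0 a.
have uk0 := u0 k; have vk0 := v0 k.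
have h1 : mu * (AF a k * u k) >= 0 by rewrite !mulr_ge0 //; lra.
have h2 : mu * sF a u k <= 1 * (alpha a * u k).
  apply: ler_pM => //; first lra.
  by apply: sF_ge0 => // i; exact: ltW.
have h3 : u k * (u k + v k - pp k) <= u k * alpha a.
  have -> : u k * (u k + v k - pp k) = mu * (sF a u k - AF a k * u k).
    have E' : mu * (sF a u k - AF a k * u k) = - (u k * (pp k - u k - v k)).
      by apply/eqP; rewrite -addr_eq0 Ek.
    rewrite E'; ring.
  rewrite mulrC; lra.
have h4 : u k + v k - pp k <= alpha a.
  by rewrite -(ler_pM2l uk0).
have h5 : pp k <= \sum_i pp i by apply: sum_ge_term => i; exact: ltW.
have := hk' j; lra.
Qed.

End Eqn.

Lemma fmin (R : realType) (I : finType) (f : I -> R) :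
  (forall i, 0 < f i) -> exists m : R, 0 < m /\ m <= 1 /\ forall i, m <= f i.
Proof.
move=> f0; set S := \sum_i (f i)^-1.
have S0 : 0 <= S by apply: sumr_ge0 => i _; rewrite invr_ge0 ltW.
have S1 : 0 < 1 + S by lra.
exists (1 + S)^-1; split; first by rewrite invr_gt0.
split; first by rewrite invf_le1 //; lra.
move=> i; rewrite -[f i]invrK lef_pV2 ?posrE ?invr_gt0 //.
have : (f i)^-1 <= S.
  rewrite /S (bigD1 i) //= lerDl; apply: sumr_ge0 => j _; rewrite invr_ge0 ltW //.
lra.
Qed.

Lemma geo_small (R : realType) (c e : R) : 0 < e -> exists k : nat, c / 2 ^+ k < e.
Proof.
move=> e0; have [c0|c0] := lerP c 0.
  by exists 0%N; rewrite expr0 divr1; lra.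
have ce0 : 0 <= c / e by rewrite divr_ge0 // ltW.
set k := Num.Def.archi_bound (c / e).
exists k.
have h1 : c / e < k%:R := archi_boundP ce0.
have h2 : (k%:R : R) < 2 ^+ k.
  by rewrite -(natrX R 2 k) ltr_nat ltn_expl.
have h3 : c / e < 2 ^+ k by lra.
have p2 : 0 < (2 : R) ^+ k by rewrite exprn_gt0.
rewrite ltr_pdivrMr //.
rewrite ltr_pdivrMr // in h3; lra.
Qed.

Lemma vanish (R : realType) (a b c : R) : (forall k : nat, a <= b + c / 2 ^+ k) -> a <= b.
Proof.
move=> H; rewrite leNgt; apply/negP => ab.
have [k hk] := @geo_small R c (a - b) ltac:(rewrite subr_gt0 //).
have := H k; lra.
Qed.

Definition slim (R : realType) (x e : nat -> R) : R := sup (fun y : R => exists k, y = x k - e k).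

Lemma slimP (R : realType) (x e : nat -> R) :
  (forall k m, (k <= m)%N -> `|x m - x k| <= e k) -> forall k, `|slim x e - x k| <= e k.
Proof.
move=> H k.
have ub : forall j y, (exists k, y = x k - e k) -> y <= x j + e j.
  move=> j y [k' ->].
  have := H k' (maxn j k') (leq_maxr _ _); have := H j (maxn j k') (leq_maxl _ _).
  move=> /ler_normlP [h1 h2] /ler_normlP [h3 h4]; lra.
apply/ler_normlP; split.
- have : x k - e k <= slim x e.
    apply: ub_le_sup; last by exists k.
    by exists (x 0%N + e 0%N) => y hy; apply: ub.
  lra.
- have : slim x e <= x k + e k.
    apply: ge_sup; first by exists (x 0%N - e 0%N); exists 0%N.
    by move=> y hy; apply: ub.
  lra.
Qed.

Lemma rearr1 (R : realType) (X x y r : R) : X + x * (r - x - y) = 0 -> x * (x + y - r) = X.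
Proof. move=> H; have E : X = - (x * (r - x - y)) by apply/eqP; rewrite -addr_eq0 H. rewrite E; ring. Qed.
Lemma rearr2 (R : realType) (X x y r : R) : X + x * (r - x - y) = 0 -> x * (y + x - r) = X.
Proof. move=> H; have E : X = - (x * (r - x - y)) by apply/eqP; rewrite -addr_eq0 H. rewrite E; ring. Qed.

Section Pos.
Variables (R : realType) (n : nat) (a : 'I_n -> 'I_n -> R).
Hypothesis a0 : forall i j, i != j -> 0 <= a i j.

Lemma pos_from_irred (pp u v : 'I_n -> R) mu :
  0 < mu -> irreducible_mx (conn_matrix a) -> eqnL a pp u v mu ->
  (forall i, 0 <= u i) -> (exists i0, 0 < u i0) -> forall i, 0 < u i.
Proof.
move=> mu0 irr E u0 [i0 hi0] i.
rewrite lt_neqAle u0 andbT eq_sym; apply/negP => /eqP ui0.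
set Z := [set k | u k == 0].
have Z0 : Z != set0 by apply/set0Pn; exists i; rewrite inE ui0.
have ZT : Z != [set: 'I_n].
  apply/negP => /eqP ZT; have : i0 \in Z by rewrite ZT inE.
  by rewrite inE => /eqP h; move: hi0; rewrite h ltxx.
have [k [j [kZ jZ Mkj]]] := irr Z Z0 ZT.
have kj : k != j by apply/negP => /eqP e; move: jZ; rewrite -e kZ.
move: Mkj; rewrite mxE (negbTE kj) => akj.
move: kZ; rewrite inE => /eqP uk.
have Ek := E k; rewrite uk mul0r addr0 mulr0 subr0 in Ek.
have sk : sF a u k = 0 by move/eqP: Ek; rewrite mulf_eq0 gt_eqF //= => /eqP.
have nn : forall l, l != k -> 0 <= a k l * u l.
  move=> l lk; apply: mulr_ge0; [apply: a0; by rewrite eq_sym | exact: u0].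
have := @psumr_eq0P _ _ (fun j => j != k) (fun j => a k j * u j) nn sk j.
rewrite eq_sym kj => /(_ isT).
move/eqP; rewrite mulf_eq0 (negbTE akj) /= => /eqP uj.
by move: jZ; rewrite inE uj eqxx.
Qed.

End Pos.

Section Apriori.
Variables (R : realType) (n : nat) (a : 'I_n -> 'I_n -> R) (p q : 'I_n -> R).
Hypotheses (a0 : forall i j, i != j -> 0 <= a i j) (pp : positive_vec p) (qp : positive_vec q)
  (pq : forall i, (q i < p i) || (p i < q i)).

Lemma mbound : exists m : R, 0 < m /\ m <= 1 /\
  forall i, m <= p i /\ m <= q i /\ m <= `|p i - q i|.
Proof.
have := @fmin R _ (fun i => Num.min (Num.min (p i) (q i)) `|p i - q i|).
case.
  move=> i; rewrite !lt_min pp qp normr_gt0 subr_eq0 /=.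
  by case/orP: (pq i) => h; [rewrite gt_eqF | rewrite lt_eqF].
move=> m [m0 [m1 hm]]; exists m; split => //; split => // i.
by have := hm i; rewrite !le_min => /andP [/andP [-> ->] ->].
Qed.

Definition Ub := \sum_i p i + \sum_i q i + alpha a.

Lemma Ub_ge0 : 0 <= Ub.
Proof.
rewrite /Ub; have := alpha_ge0 a.
have : 0 <= \sum_i p i by apply: sumr_ge0 => i _; exact: ltW.
have : 0 <= \sum_i q i by apply: sumr_ge0 => i _; exact: ltW.
lra.
Qed.

Lemma ub_both (mu : R) (u v : 'I_n -> R) : 0 < mu -> mu <= 1 -> is_pos_equilibrium a p q mu u v ->
  forall j, u j <= Ub /\ v j <= Ub.
Proof.
move=> mu0 mu1 [/eq_split [E1 E2] [u0 v0]] j.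
have h1 := ub_one a0 mu0 mu1 pp u0 v0 E1 j.
have h2 := ub_one a0 mu0 mu1 qp v0 u0 E2 j.
have : 0 <= \sum_i p i by apply: sumr_ge0 => i _; exact: ltW.
have : 0 <= \sum_i q i by apply: sumr_ge0 => i _; exact: ltW.
rewrite /Ub; split; lra.
Qed.

Lemma apriori (rho : R) : 0 < rho -> exists eta : R, 0 < eta /\
  forall mu u v, 0 < mu < eta -> is_pos_equilibrium a p q mu u v ->
  forall i, (q i < p i -> `|u i - p i| <= rho /\ v i <= rho) /\
            (p i < q i -> u i <= rho /\ `|v i - q i| <= rho).
Proof.
move=> rho0.
have [m [m0 [m1 hm]]] := mbound.
set m' := Num.min m rho.
have m'0 : 0 < m' by rewrite lt_min m0.
have m'm : m' <= m by rewrite ge_min lexx.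
have m'r : m' <= rho by rewrite ge_min lexx orbT.
have al0 := alpha_ge0 a.
have U0 := Ub_ge0.
set c := (alpha a + 1) * (1 + Ub).
have c0 : 0 < c by rewrite mulr_gt0 //; lra.
exists (Num.min 1 (m' ^+ 2 / 8 / c)); split.
  by rewrite lt_min ltr01 /= !divr_gt0 // exprn_gt0.
move=> mu u v /andP [mu0]; rewrite lt_min => /andP [mu1 mu2] PE i.
have hmu : mu * c <= m' ^+ 2 / 8 by rewrite -ler_pdivlMr // ltW.
have mu1' : mu <= 1 by exact: ltW.
have [/eq_split [E1 E2] [u0 v0]] := PE.
have B := ub_both mu0 mu1' PE.
have sb : forall w : 'I_n -> R, (forall j, 0 < w j /\ w j <= Ub) ->
    0 <= sF a w i /\ sF a w i <= alpha a * Ub.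
  move=> w hw; split; first by apply: sF_ge0 => // j; have [h _] := hw j; exact: ltW.
  apply: sF_le => // j; have [h1 h2] := hw j; by rewrite h2 ltW.
have [su1 su2] := sb u (fun j => conj (u0 j) (B j).1).
have [sv1 sv2] := sb v (fun j => conj (v0 j) (B j).2).
have [mp [mq mpq]] := hm i.
have A0 := AF_ge0 a0 i; have A1 := AF_le a i.
split => lt.
  rewrite gtr0_norm ?subr_gt0 // in mpq.
  have := @site_apriori R (u i) (v i) (p i) (q i) mu (sF a u i) (sF a v i) (AF a i) (alpha a) Ub rho m'
    mu0 mu1' (u0 i) (v0 i) (B i).1 su1 su2 sv1 sv2 A0 A1 al0 U0 (rearr1 (E1 i)) (rearr2 (E2 i))
    m'0 ltac:(lra) ltac:(lra) m'r ltac:(lra) hmu.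
  by move=> [/andP [h1 h1'] h2]; split; [apply/ler_normlP; split; lra | lra].
rewrite distrC gtr0_norm ?subr_gt0 // in mpq.
have := @site_apriori R (v i) (u i) (q i) (p i) mu (sF a v i) (sF a u i) (AF a i) (alpha a) Ub rho m'
  mu0 mu1' (v0 i) (u0 i) (B i).2 sv1 sv2 su1 su2 A0 A1 al0 U0 (rearr1 (E2 i)) (rearr2 (E1 i))
  m'0 ltac:(lra) ltac:(lra) m'r ltac:(lra) hmu.
by move=> [/andP [h1 h1'] h2]; split; [lra | apply/ler_normlP; split; lra].
Qed.

End Apriori.

Lemma big_fix (R : realType) (r x y s A mu : R) : 0 < x ->
  (x = bigF r x y s A mu <-> mu * (s - A * x) + x * (r - x - y) = 0).
Proof.
move=> x0; have xn : x != 0 by rewrite gt_eqF.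
rewrite /bigF; split => H.
  have E1 : mu * (s - A * x) = x * (mu * (s / x - A)) by field; rewrite ?xn //.
  have E2 : mu * (s / x - A) = x - (r - y) by rewrite [in RHS]H; ring.
  rewrite E1 E2; ring.
have E : mu * (s / x - A) = (mu * (s - A * x)) / x by field; rewrite ?xn //.
rewrite E.
have E2 : mu * (s - A * x) = - (x * (r - x - y)) by apply/eqP; rewrite -addr_eq0 H.
rewrite E2; field; rewrite ?xn //.
Qed.

Lemma small_fix (R : realType) (r x y s A mu : R) : 0 < x + y - r + mu * A ->
  (x = smallF r x y s A mu <-> mu * (s - A * x) + x * (r - x - y) = 0).
Proof.
move=> d0; have xn : x + y - r + mu * A != 0 by rewrite gt_eqF.
rewrite /smallF; split => H.
  have E1 : mu * s = x * (x + y - r + mu * A).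
    by rewrite {1}H; field; rewrite ?xn //.
  have -> : mu * (s - A * x) = mu * s - mu * A * x by ring.
  rewrite E1; ring.
have E2 : mu * s = x * (x + y - r + mu * A).
  have E3 : mu * (s - A * x) = - (x * (r - x - y)) by apply/eqP; rewrite -addr_eq0 H.
  have -> : mu * s = mu * (s - A * x) + mu * A * x by ring.
  rewrite E3; ring.
rewrite E2; field; rewrite ?xn //.
Qed.

Section Map.
Variables (R : realType) (n : nat) (a : 'I_n -> 'I_n -> R) (p q : 'I_n -> R).
Hypotheses (a0 : forall i j, i != j -> 0 <= a i j) (pp : positive_vec p) (qp : positive_vec q)
  (pq : forall i, (q i < p i) || (p i < q i)).

Definition vec := (('I_n -> R) * ('I_n -> R))%type.

Definition Fmap (mu : R) (x : vec) : vec :=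
  (fun i => if q i < p i then bigF (p i) (x.1 i) (x.2 i) (sF a x.1 i) (AF a i) mu
            else smallF (p i) (x.1 i) (x.2 i) (sF a x.1 i) (AF a i) mu,
   fun i => if q i < p i then smallF (q i) (x.2 i) (x.1 i) (sF a x.2 i) (AF a i) mu
            else bigF (q i) (x.2 i) (x.1 i) (sF a x.2 i) (AF a i) mu).

Definition inK (rho : R) (x : vec) := forall i,
  if q i < p i then `|x.1 i - p i| <= 2 * rho /\ 0 <= x.2 i /\ x.2 i <= rho
  else 0 <= x.1 i /\ x.1 i <= rho /\ `|x.2 i - q i| <= 2 * rho.

Definition distK (x y : vec) (D : R) := forall i,
  if q i < p i then `|x.1 i - y.1 i| <= D /\ `|x.2 i - y.2 i| <= D / 4
  else `|x.1 i - y.1 i| <= D / 4 /\ `|x.2 i - y.2 i| <= D.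

Definition Bb := \sum_i p i + \sum_i q i + 1.

Definition good (m rho mu : R) :=
  0 < m /\ m <= 1 /\ (forall i, m <= p i /\ m <= q i /\ m <= `|p i - q i|) /\
  0 < rho /\ 4 * rho <= m /\ 0 < mu /\ mu <= 1 /\
  mu * (32 * ((alpha a + 1) * (4 * Bb + alpha a + 1))) <= m ^+ 2 /\
  mu * ((alpha a + 1) * (2 * Bb + 1)) * 4 <= m * rho.

Lemma pB i : p i <= \sum_j p j + \sum_j q j.
Proof.
have := sum_ge_term (f := p) i (fun j => ltW (pp j)).
have : 0 <= \sum_j q j by apply: sumr_ge0 => j _; exact: ltW.
lra.
Qed.

Lemma qB i : q i <= \sum_j p j + \sum_j q j.
Proof.
have := sum_ge_term (f := q) i (fun j => ltW (qp j)).
have : 0 <= \sum_j p j by apply: sumr_ge0 => j _; exact: ltW.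
lra.
Qed.

Lemma lt_neg i : ~~ (q i < p i) -> p i < q i.
Proof. by move=> /negbTE h; have := pq i; rewrite h. Qed.

Lemma inK_bound m rho mu x : good m rho mu -> inK rho x ->
  forall j, (0 <= x.1 j <= Bb) && (0 <= x.2 j <= Bb).
Proof.
move=> [m0 [m1 [hm [rho0 [rhom _]]]]] K j.
have := pB j; have := qB j; have [mp [mq _]] := hm j.
rewrite /Bb; move: (K j); case: ifP => _ [h1 [h2 h3]].
  move/ler_normlP: h1 => [h1 h1'] *; apply/andP; split; apply/andP; split; lra.
move/ler_normlP: h3 => [h3 h3'] *; apply/andP; split; apply/andP; split; lra.
Qed.

Lemma sF_bounds m rho mu (x : vec) i : good m rho mu -> inK rho x ->
  (0 <= sF a x.1 i /\ sF a x.1 i <= alpha a * Bb) /\ (0 <= sF a x.2 i /\ sF a x.2 i <= alpha a * Bb).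
Proof.
move=> G K; have xb := inK_bound G K.
have B0 : 0 <= Bb.
  have := pB i; rewrite /Bb.
  move=> _; have : 0 <= \sum_j p j + \sum_j q j.
    by rewrite addr_ge0 // sumr_ge0 // => j _; apply: ltW.
  lra.
split; split.
- by apply: sF_ge0 => // j; case/andP: (xb j) => /andP [].
- by apply: sF_le => // j; case/andP: (xb j).
- by apply: sF_ge0 => // j; case/andP: (xb j) => _ /andP [].
- by apply: sF_le => // j; case/andP: (xb j).
Qed.

Lemma F_in m rho mu x : good m rho mu -> inK rho x -> inK rho (Fmap mu x).
Proof.
move=> G K; have G' := G.
move: G' => [m0 [m1 [hm [rho0 [rhom [mu0 [mu1 [Cc Ci]]]]]]]].
have al0 := alpha_ge0 a.
move=> i; rewrite /Fmap /=.
have rhoB : rho <= Bb.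
  have := pB i; have [mp _] := hm i; have := pp i; rewrite /Bb; lra.
have [[s1 s2] [s3 s4]] := sF_bounds i G K.
have [mp [mq mpq]] := hm i.
have pB' : p i + 2 * rho <= Bb by have := pB i; rewrite /Bb; lra.
have qB' : q i + 2 * rho <= Bb by have := qB i; rewrite /Bb; lra.
have A0 := AF_ge0 a0 i; have A1 := AF_le a i.
move: (K i); case: ifP => h [k1 [k2 k3]].
  rewrite gtr0_norm ?subr_gt0 // in mpq.
  split; first exact: (big_in _ _ _ _ _ _ al0 m0 m1 rho0 rhom rhoB mu0 mu1 Cc Ci _ _ _ _ _ mp pB' k1 k2 k3 s1 s2 A0 A1).
  by apply: (small_in _ _ _ _ _ _ al0 m0 m1 rho0 rhom rhoB mu0 mu1 Cc Ci _ _ _ _ _ _ k2 k3 k1 mpq s3 s4 A0 A1).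
have h' := lt_neg (negbT h).
rewrite distrC gtr0_norm ?subr_gt0 // in mpq.
have [l1 l2] := small_in _ _ _ _ _ _ al0 m0 m1 rho0 rhom rhoB mu0 mu1 Cc Ci _ _ _ _ _ _ k1 k2 k3 mpq s1 s2 A0 A1.
split => //; split => //.
exact: (big_in _ _ _ _ _ _ al0 m0 m1 rho0 rhom rhoB mu0 mu1 Cc Ci _ _ _ _ _ mq qB' k3 k1 k2 s3 s4 A0 A1).
Qed.

Lemma dist_all x y D : 0 <= D -> distK x y D ->
  forall j, `|x.1 j - y.1 j| <= D /\ `|x.2 j - y.2 j| <= D.
Proof.
move=> D0 H j; move: (H j); case: ifP => _ [h1 h2]; split => //;
  apply: (le_trans (y := D / 4)) => //; lra.
Qed.

Lemma sF_diff (w w' : 'I_n -> R) D i : 0 <= D -> (forall j, `|w j - w' j| <= D) ->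
  `|sF a w i - sF a w' i| <= alpha a * D.
Proof. by move=> D0 H; rewrite sF_sub; apply: sF_bound. Qed.

Lemma F_contr m rho mu x y D : good m rho mu -> inK rho x -> inK rho y -> 0 <= D ->
  distK x y D -> distK (Fmap mu x) (Fmap mu y) (D / 2).
Proof.
move=> G Kx Ky D0 Dxy; have G' := G.
move: G' => [m0 [m1 [hm [rho0 [rhom [mu0 [mu1 [Cc Ci]]]]]]]].
have al0 := alpha_ge0 a.
have Da := dist_all D0 Dxy.
move=> i; rewrite /Fmap /=.
have rhoB : rho <= Bb.
  have := pB i; have [mp _] := hm i; have := pp i; rewrite /Bb; lra.
have [[s1 s2] [s3 s4]] := sF_bounds i G Kx.
have [[t1 t2] [t3 t4]] := sF_bounds i G Ky.
have d1 : `|sF a x.1 i - sF a y.1 i| <= alpha a * D by apply: sF_diff => // j; case: (Da j).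
have d2 : `|sF a x.2 i - sF a y.2 i| <= alpha a * D by apply: sF_diff => // j; case: (Da j).
have [mp [mq mpq]] := hm i.
have pB' : p i + 2 * rho <= Bb by have := pB i; rewrite /Bb; lra.
have qB' : q i + 2 * rho <= Bb by have := qB i; rewrite /Bb; lra.
have A0 := AF_ge0 a0 i; have A1 := AF_le a i.
have p0 := pp i; have q0 := qp i.
have e8 : D / 8 = D / 2 / 4 by field.
move: (Kx i) (Ky i) (Dxy i); case: ifP => h [k1 [k2 k3]] [l1 [l2 l3]] [e1 e2].
  rewrite gtr0_norm ?subr_gt0 // in mpq.
  split.
    exact: (big_contr _ _ _ _ _ _ al0 m0 m1 rho0 rhom rhoB mu0 mu1 Cc Ci _ _ _ _ _ _ _ _ _
      k1 l1 mp pB' e2 s1 s2 t1 t2 d1 e1 D0).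
  rewrite -e8.
  exact: (small_contr _ _ _ _ _ _ al0 m0 m1 rho0 rhom rhoB mu0 mu1 Cc Ci _ _ _ _ _ _ _ _ _ _
      k2 k3 l2 l3 k1 l1 mpq pB' (ltW q0) e2 e1 s3 s4 t3 t4 d2 A0 A1 D0).
have h' := lt_neg (negbT h).
rewrite distrC gtr0_norm ?subr_gt0 // in mpq.
split.
  rewrite -e8.
  exact: (small_contr _ _ _ _ _ _ al0 m0 m1 rho0 rhom rhoB mu0 mu1 Cc Ci _ _ _ _ _ _ _ _ _ _
      k1 k2 l1 l2 k3 l3 mpq qB' (ltW p0) e1 e2 s1 s2 t1 t2 d1 A0 A1 D0).
exact: (big_contr _ _ _ _ _ _ al0 m0 m1 rho0 rhom rhoB mu0 mu1 Cc Ci _ _ _ _ _ _ _ _ _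
      k3 l3 mq qB' e1 s3 s4 t3 t4 d2 e2 D0).
Qed.

Lemma iter_in m rho mu k x : good m rho mu -> inK rho x -> inK rho (iter k (Fmap mu) x).
Proof. move=> G K; elim: k => [|k IH] /=; [exact: K | exact: F_in G IH]. Qed.

Lemma iter_dist m rho mu k x y D : good m rho mu -> inK rho x -> inK rho y -> 0 <= D ->
  distK x y D -> distK (iter k (Fmap mu) x) (iter k (Fmap mu) y) (D / 2 ^+ k).
Proof.
move=> G Kx Ky D0 Dxy; elim: k => [|k IH] /=; first by rewrite expr0 divr1.
have -> : D / 2 ^+ k.+1 = D / 2 ^+ k / 2 by rewrite exprS [2 * _]mulrC invfM mulrA.
apply: (F_contr G (iter_in k G Kx) (iter_in k G Ky) _ IH).
by rewrite divr_ge0 // exprn_ge0.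
Qed.

Lemma inK_dist m rho mu x y : good m rho mu -> inK rho x -> inK rho y -> distK x y (4 * rho).
Proof.
move=> G Kx Ky i; move: (Kx i) (Ky i); case: ifP => _ [k1 [k2 k3]] [l1 [l2 l3]].
  split; last by apply/ler_normlP; split; lra.
  move/ler_normlP: k1 => [? ?]; move/ler_normlP: l1 => [? ?]; apply/ler_normlP; split; lra.
split; first by apply/ler_normlP; split; lra.
move/ler_normlP: k3 => [? ?]; move/ler_normlP: l3 => [? ?]; apply/ler_normlP; split; lra.
Qed.

Lemma iter_fix mu k x : Fmap mu x = x -> iter k (Fmap mu) x = x.
Proof. by move=> H; elim: k => [|k IH] //=; rewrite IH H. Qed.

Lemma vec_eq (x y : vec) : (forall i, x.1 i = y.1 i /\ x.2 i = y.2 i) -> x = y.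
Proof.
move=> H; case: x H => x1 x2; case: y => y1 y2 /= H.
have -> : x1 = y1 by apply: functional_extensionality => i; case: (H i).
have -> : x2 = y2 by apply: functional_extensionality => i; case: (H i).
by [].
Qed.

Lemma zero_of (c : R) (z : R) : (forall k : nat, `|z| <= 0 + c / 2 ^+ k) -> z = 0.
Proof. by move=> H; apply/eqP; rewrite -normr_le0; apply: vanish H. Qed.

Lemma fix_unique m rho mu x y : good m rho mu -> inK rho x -> inK rho y ->
  Fmap mu x = x -> Fmap mu y = y -> x = y.
Proof.
move=> G Kx Ky Fx Fy.
have r0 : 0 < rho by have := G; case=> _ [_ [_ [r0 _]]].
have D : forall k, distK x y (4 * rho / 2 ^+ k).
  have D0 : 0 <= 4 * rho by lra.
  move=> k; have := iter_dist k G Kx Ky D0 (inK_dist G Kx Ky).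
  by rewrite !iter_fix.
have D' : forall k i, `|x.1 i - y.1 i| <= 4 * rho / 2 ^+ k /\ `|x.2 i - y.2 i| <= 4 * rho / 2 ^+ k.
  move=> k i; apply: dist_all (D k) i; rewrite divr_ge0 ?exprn_ge0 //; lra.
apply: vec_eq => i; split; apply/eqP; rewrite -subr_eq0; apply/eqP;
  apply: (@zero_of (4 * rho)) => k; rewrite add0r; by case: (D' k i).
Qed.

Lemma fix_exists m rho mu x0 : good m rho mu -> inK rho x0 ->
  exists x, inK rho x /\ Fmap mu x = x.
Proof.
move=> G K0.
have r0 : 0 < rho by have := G; case=> _ [_ [_ [r0 _]]].
set xs := fun k => iter k (Fmap mu) x0.
set E := fun k : nat => 4 * rho / 2 ^+ k.
have E0 : forall k, 0 <= E k by move=> k; rewrite /E divr_ge0 ?exprn_ge0 //; lra.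
have Ek1 : forall k, E k.+1 <= E k.
  move=> k; have -> : E k.+1 = E k / 2 by rewrite /E exprS [2 * _]mulrC invfM mulrA.
  have := E0 k; lra.
have Kk : forall k, inK rho (xs k) by move=> k; exact: (iter_in k G K0).
have Dkm : forall k m', (k <= m')%N -> distK (xs k) (xs m') (E k).
  move=> k m' km; rewrite /xs -(subnKC km) iterD.
  have h4 : 0 <= 4 * rho by lra.
  exact: (iter_dist k G K0 (iter_in (m' - k) G K0) h4 (inK_dist G K0 (iter_in (m' - k) G K0))).
have C1 : forall i k m', (k <= m')%N ->
    `|(xs m').1 i - (xs k).1 i| <= E k /\ `|(xs m').2 i - (xs k).2 i| <= E k.
  by move=> i k m' km; rewrite distrC [X in _ /\ X <= _]distrC; apply: dist_all (Dkm k m' km) i.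
pose l : vec := (fun i => slim (fun k => (xs k).1 i) E, fun i => slim (fun k => (xs k).2 i) E).
have L1 : forall i k, `|l.1 i - (xs k).1 i| <= E k.
  by move=> i; apply: slimP => k m' km; case: (C1 i k m' km).
have L2 : forall i k, `|l.2 i - (xs k).2 i| <= E k.
  by move=> i; apply: slimP => k m' km; case: (C1 i k m' km).
have Kl : inK rho l.
  move=> i; case: ifP => h.
  - split; [|split].
    + apply: (@vanish _ _ _ (4 * rho)) => k; have := L1 i k; have := Kk k i; rewrite h => -[k1 _].
      move/ler_normlP: k1 => [? ?] /ler_normlP [? ?]; rewrite -/(E k); apply/ler_normlP; split; lra.
    + rewrite -oppr_le0; apply: (@vanish _ _ _ (4 * rho)) => k; have := L2 i k; have := Kk k i; rewrite h => -[_ [k2 k3]].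
      move/ler_normlP => [? ?]; rewrite -/(E k); lra.
    + apply: (@vanish _ _ _ (4 * rho)) => k; have := L2 i k; have := Kk k i; rewrite h => -[_ [k2 k3]].
      move/ler_normlP => [? ?]; rewrite -/(E k); lra.
  - split; [|split].
    + rewrite -oppr_le0; apply: (@vanish _ _ _ (4 * rho)) => k; have := L1 i k; have := Kk k i; rewrite h => -[k2 [k3 _]].
      move/ler_normlP => [? ?]; rewrite -/(E k); lra.
    + apply: (@vanish _ _ _ (4 * rho)) => k; have := L1 i k; have := Kk k i; rewrite h => -[k2 [k3 _]].
      move/ler_normlP => [? ?]; rewrite -/(E k); lra.
    + apply: (@vanish _ _ _ (4 * rho)) => k; have := L2 i k; have := Kk k i; rewrite h => -[_ [_ k1]].
      move/ler_normlP: k1 => [? ?] /ler_normlP [? ?]; rewrite -/(E k); apply/ler_normlP; split; lra.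
exists l; split => //.
have Dk : forall k, distK l (xs k) (4 * E k).
  move=> k i; case: ifP => _; split; have := L1 i k; have := L2 i k; have := E0 k; lra.
have FD : forall k i, `|(Fmap mu l).1 i - (xs k.+1).1 i| <= 4 * E k / 2 /\
                      `|(Fmap mu l).2 i - (xs k.+1).2 i| <= 4 * E k / 2.
  move=> k i; apply: dist_all; first by have := E0 k; lra.
  have h4 : 0 <= 4 * E k by have := E0 k; lra.
  exact: (F_contr G Kl (Kk k) h4 (Dk k)).
have e3 : forall k, 12 * rho / 2 ^+ k = 3 * E k by move=> k; rewrite /E; ring.
apply: vec_eq => i; split; apply/eqP; rewrite -subr_eq0; apply/eqP;
  apply: (@zero_of (12 * rho)) => k; rewrite add0r e3;
  have := FD k i; have := L1 i k.+1; have := L2 i k.+1; have := Ek1 k;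
  move=> ? /ler_normlP [? ?] /ler_normlP [? ?] [/ler_normlP [? ?] /ler_normlP [? ?]];
  apply/ler_normlP; split; lra.
Qed.

Lemma fix_eqn m rho mu x : good m rho mu -> inK rho x ->
  (Fmap mu x = x <-> eqnL a p x.1 x.2 mu /\ eqnL a q x.2 x.1 mu).
Proof.
move=> G K; have G' := G.
move: G' => [m0 [m1 [hm [rho0 [rhom [mu0 [mu1 [Cc Ci]]]]]]]].
have pos1 : forall i, q i < p i -> 0 < x.1 i /\ 0 < x.2 i + x.1 i - q i + mu * AF a i.
  move=> i h; have := K i; rewrite h => -[/ler_normlP [k1 k1'] [k2 k3]].
  have [mp [mq mpq]] := hm i; rewrite gtr0_norm ?subr_gt0 // in mpq.
  have : 0 <= mu * AF a i by rewrite mulr_ge0 ?AF_ge0 //; lra.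
  split; lra.
have pos2 : forall i, ~~ (q i < p i) -> 0 < x.2 i /\ 0 < x.1 i + x.2 i - p i + mu * AF a i.
  move=> i h; have h' := lt_neg h; have := K i; rewrite (negbTE h) => -[k1 [k2 /ler_normlP [k3 k3']]].
  have [mp [mq mpq]] := hm i; rewrite distrC gtr0_norm ?subr_gt0 // in mpq.
  have : 0 <= mu * AF a i by rewrite mulr_ge0 ?AF_ge0 //; lra.
  split; lra.
split.
  move=> Fx; split => i.
    have := congr1 (fun z : vec => z.1 i) Fx; rewrite /Fmap /=.
    case: ifP => h H.
      by apply/(big_fix _ _ _ _ _ (pos1 i h).1); rewrite H.
    by apply/(small_fix _ (pos2 i (negbT h)).2); rewrite H.
  have := congr1 (fun z : vec => z.2 i) Fx; rewrite /Fmap /=.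
  case: ifP => h H.
    by apply/(small_fix _ (pos1 i h).2); rewrite H.
  by apply/(big_fix _ _ _ _ _ (pos2 i (negbT h)).1); rewrite H.
move=> [E1 E2]; apply: vec_eq => i; rewrite /Fmap /=; case: ifP => h; split.
- by symmetry; apply/(big_fix _ _ _ _ _ (pos1 i h).1); exact: E1.
- by symmetry; apply/(small_fix _ (pos1 i h).2); exact: E2.
- by symmetry; apply/(small_fix _ (pos2 i (negbT h)).2); exact: E1.
- by symmetry; apply/(big_fix _ _ _ _ _ (pos2 i (negbT h)).1); exact: E2.
Qed.

End Map.

Unset Implicit Arguments. Set Strict Implicit. Set Printing Implicit Defensive.

Theorem theorem4p5 (R : realType) (n : nat) (a : 'I_n -> 'I_n -> R)
    (p q : 'I_n -> R) :
  (2 <= n)%N ->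
  (forall i j, i != j -> 0 <= a i j) ->
  irreducible_mx (conn_matrix a) ->
  cycle_balanced a ->
  positive_vec p -> positive_vec q ->
  (exists i, q i < p i) -> (exists i, p i < q i) ->
  (forall i, (q i < p i) || (p i < q i)) ->
  exists delta : R, 0 < delta /\
    (forall mu, 0 < mu < delta ->
       exists u v, is_pos_equilibrium a p q mu u v /\
         forall u' v', is_pos_equilibrium a p q mu u' v' -> u' = u /\ v' = v) /\
    (forall eps : R, 0 < eps -> exists eta : R, 0 < eta /\
       forall mu u v, 0 < mu < eta -> is_pos_equilibrium a p q mu u v ->
         forall i, `|u i - u0 p q i| < eps /\ `|v i - v0 p q i| < eps).
Proof.
move=> _ a0 irr _ pp qp [iu hiu] [iv hiv] pq.
have [m [m0 [m1 hm]]] := mbound pp qp pq.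
set rho := m / 4.
have rho0 : 0 < rho by rewrite /rho; lra.
have rhom : 4 * rho = m by rewrite /rho; lra.
have al0 := alpha_ge0 a.
have Bb1 : 1 <= Bb p q.
  rewrite /Bb; have : 0 <= \sum_i p i by apply: sumr_ge0 => i _; exact: ltW.
  have : 0 <= \sum_i q i by apply: sumr_ge0 => i _; exact: ltW.
  lra.
set K1 := (alpha a + 1) * (4 * Bb p q + alpha a + 1).
set K2 := (alpha a + 1) * (2 * Bb p q + 1).
have K10 : 0 < K1 by rewrite /K1 mulr_gt0 //; lra.
have K20 : 0 < K2 by rewrite /K2 mulr_gt0 //; lra.
set etaB := Num.min 1 (Num.min (m ^+ 2 / (32 * K1)) (m * rho / (4 * K2))).
have etaB0 : 0 < etaB.
  rewrite /etaB !lt_min ltr01 /= !divr_gt0 ?exprn_gt0 ?mulr_gt0 //; lra.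
have good_of : forall mu, 0 < mu -> mu < etaB -> good a p q m rho mu.
  move=> mu mu0; rewrite /etaB !lt_min => /andP [mu1 /andP [mu2 mu3]].
  have h1 : 0 < 32 * K1 by lra.
  have h2 : 0 < 4 * K2 by lra.
  rewrite ltr_pdivlMr // in mu2.
  rewrite ltr_pdivlMr // in mu3.
  rewrite /good; do 3! (split => //).
  split => //; split; first by rewrite /rho; lra.
  split => //; split; first lra.
  rewrite -/K1 -/K2; split; lra.
have [etaA [etaA0 HA]] := apriori a0 pp qp pq rho0.
exists (Num.min etaA etaB); split; first by rewrite lt_min etaA0.
split.
  move=> mu /andP [mu0]; rewrite lt_min => /andP [muA muB].
  have G := good_of mu mu0 muB.
  have K0 : inK p q rho (u0 p q, v0 p q).
    move=> i; rewrite /u0 /v0 /=; case: ifP => h.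
      have -> : (p i < q i) = false by rewrite ltNge (ltW h).
      by rewrite h subrr normr0; split; [lra | split; lra].
    have -> : p i < q i by have := pq i; rewrite h.
    by rewrite ?h subrr normr0; split; [lra | split; lra].
  have [x [Kx Fx]] := fix_exists a0 pp qp pq G K0.
  have [E1 E2] := (fix_eqn a0 pq G Kx).1 Fx.
  have xb := inK_bound pp qp G Kx.
  have big1 : forall i, q i < p i -> 0 < x.1 i.
    move=> i h; have := Kx i; rewrite h => -[/ler_normlP [k1 _] _].
    have [mp _] := hm i; lra.
  have big2 : forall i, p i < q i -> 0 < x.2 i.
    move=> i h; have := Kx i; rewrite ltNge (ltW h) /= => -[_ [_ /ler_normlP [k1 _]]].
    have [_ [mq _]] := hm i; lra.
  have P1 : positive_vec x.1.
    apply: (pos_from_irred a0 mu0 irr E1); last by exists iu; exact: big1.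
    by move=> j; case/andP: (xb j) => /andP [].
  have P2 : positive_vec x.2.
    apply: (pos_from_irred a0 mu0 irr E2); last by exists iv; exact: big2.
    by move=> j; case/andP: (xb j) => _ /andP [].
  exists x.1, x.2; split; first by split; [exact/eq_split | split].
  move=> u' v' PE'.
  have [/eq_split [E1' E2'] [P1' P2']] := PE'.
  have Kx' : inK p q rho (u', v').
    move=> i; have [h1 h2] := HA mu u' v' (ltac:(by rewrite mu0 muA)) PE' i.
    rewrite /=; case: ifP => h.
      have [k1 k2] := h1 h; have := P2' i; split; [lra | split; lra].
    have [k1 k2] := h2 (lt_neg pq (negbT h)); have := P1' i; split; [lra | split; lra].
  have Fx' := (fix_eqn a0 pq G Kx').2 (conj E1' E2').
  have U := fix_unique a0 pp qp pq G Kx' Kx Fx' Fx.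
  by rewrite -U.
move=> eps eps0.
have eps2 : 0 < eps / 2 by lra.
have [eta [eta0 H]] := apriori a0 pp qp pq eps2.
exists eta; split => // mu u v mueta PE i.
have [h1 h2] := H mu u v mueta PE i.
have [_ [Pu Pv]] := PE.
have := Pu i; have := Pv i.
rewrite /u0 /v0; case: ifP => h.
  have -> : (p i < q i) = false by rewrite ltNge (ltW h).
  have [k1 k2] := h1 h; rewrite subr0 => ? ?; rewrite [`|v i|]gtr0_norm //; split; lra.
have h' : p i < q i by have := pq i; rewrite h.
rewrite h'; have [k1 k2] := h2 h'; rewrite subr0 => ? ?; rewrite [`|u i|]gtr0_norm //; split; lra.
Qed.
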